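(* Let $n\ge2$ and $k\ge1$ with $2k\le n$. Let $w_0w_1\dots w_{2k+1}$ be any Dyck word of length $2(k+1)$ over $\{u,d\}$. Define the sequence $s_1s_2\dots s_{2k}$ by: if $w_i$ is the $r$-th letter $d$ among $w_1,\dots,w_{2k}$, then $s_i$ is the $r$-th smallest element of $A_{2k}=\{1,2,4,\dots,2k-2\}$; if $w_i$ is the $r$-th letter $u$ among $w_1,\dots,w_{2k}$, then $s_i$ is the $r$-th smallest element of $[2k]\setminus A_{2k}=\{3,5,\dots,2k-1,2k\}$. Then $s_1s_2\dots s_{2k}$ is the sequence of the top $2k$ alternatives of some order belonging to part $k$ of $D_X(A_n)$.
   Context: A Dyck word of length $2m$ is a sequence $a_1\dots a_{2m}$ of $m$ letters $u$ and $m$ letters $d$ such that every prefix contains at least as many $u$'s as $d$'s (so $w_0=u$, $w_{2k+1}=d$, and $w_1\dots w_{2k}$ has $k$ letters of each kind). For $m\ge1$ let $A_m=\{1\}\cup\{\text{even } j: 2\le j\le m-1\}$. For $A\subseteq[n]$, $D_X(A)$ is the set of all linear orders $q$ on $[n]$ (written top to bottom) such that for every triple $i<j<l$: if $j\in A$ then $i$ is not ranked last among $\{i,j,l\}$ in $q$, and if $j\notin A$ then $l$ is not ranked first among $\{i,j,l\}$ in $q$. Part $k$ of $D_X(A_n)$ consists of the orders in $D_X(A_n)$ whose top $2k$ positions are occupied exactly by $[2k]$ but, when $k\ge2$, whose top $2(k-1)$ positions are not occupied exactly by $[2(k-1)]$. *)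

(* Defs.v *)
From mathcomp Require Import all_boot.
Set Implicit Arguments. Unset Strict Implicit. Unset Printing Implicit Defensive.

(* Letters of a word: true = u, false = d. *)

Definition dyck (w : seq bool) : bool :=
  (count id w == count negb w) &&
  all (fun p => count negb (take p w) <= count id (take p w)) (iota 0 (size w).+1).

Definition Aset (m : nat) : pred nat :=
  fun j => (j == 1) || [&& ~~ odd j, 2 <= j & j <= m.-1].

(* A linear order on [n] = {1..n}, written top to bottom as a sequence;
   position (index) 0 is the top. *)
Definition is_order (n : nat) (q : seq nat) : bool := perm_eq q (iota 1 n).

Definition DX (n : nat) (A : pred nat) (q : seq nat) : Prop :=
  is_order n q /\
  forall i j l : nat, 1 <= i -> i < j -> j < l -> l <= n ->
    (A j -> ~~ ((index j q < index i q) && (index l q < index i q))) /\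
    (~~ A j -> ~~ ((index l q < index i q) && (index l q < index j q))).

Definition top_is (q : seq nat) (m : nat) : bool := perm_eq (take m q) (iota 1 m).

Definition in_part (n k : nat) (q : seq nat) : Prop :=
  DX n (Aset n) q /\ top_is q (2 * k) /\ (2 <= k -> ~~ top_is q (2 * (k - 1))).

Definition Alist (k : nat) : seq nat := [seq j <- iota 1 (2 * k) | Aset (2 * k) j].
Definition Clist (k : nat) : seq nat := [seq j <- iota 1 (2 * k) | ~~ Aset (2 * k) j].

Definition sseq (k : nat) (w : seq bool) : seq nat :=
  [seq (let c := nth false w i in
        let r := count (pred1 c) (take i (drop 1 w)) in
        if c then nth 0 (Clist k) r.-1 else nth 0 (Alist k) r.-1)
  | i <- iota 1 (2 * k)].

(* Main.v *)
Require Import Defs.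
From mathcomp Require Import all_boot zify.

Fixpoint mrg (v : seq bool) (A C : seq nat) : seq nat :=
  if v is b :: v' then
    (if b then head 0 C :: mrg v' A (behead C) else head 0 A :: mrg v' (behead A) C)
  else [::].

Lemma mrg_nth v A C r t : mrg v (drop r A) (drop t C) =
  [seq (let c := nth false v p in let cnt := count (pred1 c) (take p.+1 v) in
        if c then nth 0 C (t + cnt).-1 else nth 0 A (r + cnt).-1) | p <- iota 0 (size v)].
Proof.
elim: v r t => [|b v IH] r t //=.
rewrite -[1]addn0 iotaDl -map_comp eqxx /=.
case: b; (congr (_ :: _); first by rewrite take0 -nth0 nth_drop addn0 addn1);
  rewrite -drop1 drop_drop IH; apply: eq_map => p /=; rewrite add1n /=;
  by case: (nth false v p) => /=; rewrite ?addSnnS ?add0n ?addn0 ?addn1 ?addnS.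
Qed.

Lemma mrg_perm v A C : count id v <= size C -> count negb v <= size A ->
  perm_eq (mrg v A C) (take (count negb v) A ++ take (count id v) C).
Proof.
elim: v A C => [|b v IH] A C /=; first by rewrite !take0.
case: b => /=.
- case: C => [|c C] //= h1 h2.
  rewrite !add0n; apply: (@perm_trans _ ([:: c] ++ take (count negb v) A ++ take (count id v) C)); first by rewrite perm_cons IH. by rewrite perm_catCA.
- case: A => [|a A] //= h1 h2. rewrite perm_cons. by apply: IH.
Qed.

Lemma mrg_map (P : pred nat) v A C : count id v <= size C -> count negb v <= size A ->
  all P C -> all (predC P) A -> map P (mrg v A C) = v.
Proof.
elim: v A C => [|b v IH] A C //=.
case: b => /=.
- case: C => [|c C] //= h1 h2 /andP[pc hC] hA. by rewrite pc IH.
- case: A => [|a A] //= h1 h2 hC /andP[pa hA]. by rewrite (negbTE pa) IH.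
Qed.

Fixpoint good (v : seq bool) (A C : seq nat) : bool :=
  if v is b :: v' then
    (if b then good v' A (behead C) else all (fun c => head 0 A < c) C && good v' (behead A) C)
  else true.

Lemma mrg_inv v A C : count id v <= size C -> count negb v <= size A ->
  sorted ltn A -> sorted ltn C -> good v A C ->
  forall x y, x < y -> x \in mrg v A C -> y \in mrg v A C ->
  index y (mrg v A C) < index x (mrg v A C) -> (x \in A) && (y \in C).
Proof.
elim: v A C => [|b v IH] A C //=.
case: b => /=.
- case: C => [|c C] //= h1 h2 sA sC g x y xy.
  rewrite !inE /= => hx hy.
  have sC' := path_sorted sC.
  have hm : forall z, z \in mrg v A C -> (z \in A) || (z \in C).
    by move=> z; rewrite (perm_mem (mrg_perm _ _ _ h1 h2)) mem_cat => /orP[/mem_take|/mem_take] ->; rewrite ?orbT.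
  case: (eqVneq c x) => [<-|cx]; first by rewrite ltn0.
  case: (eqVneq c y) => [cy|cy] /=.
  + move=> _. rewrite andbT.
    move: hx; rewrite eq_sym (negbTE cx) /= => /hm /orP[//|xC].
    have := order_path_min ltn_trans sC => /allP /(_ _ xC). rewrite cy. lia.
  + rewrite ltnS => hi.
    move: hx hy; rewrite eq_sym (negbTE cx) eq_sym (negbTE cy) /= => hx hy.
    by case/andP: (IH A C h1 h2 sA sC' g x y xy hx hy hi) => -> ->; rewrite ?orbT.
- case: A => [|a A] //= h1 h2 sA sC /andP[ac g] x y xy.
  rewrite !inE /= => hx hy.
  have sA' := path_sorted sA.
  have hm : forall z, z \in mrg v A C -> (z \in A) || (z \in C).
    by move=> z; rewrite (perm_mem (mrg_perm _ _ _ h1 h2)) mem_cat => /orP[/mem_take|/mem_take] ->; rewrite ?orbT.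
  case: (eqVneq a x) => [<-|ax]; first by rewrite ltn0.
  case: (eqVneq a y) => [ay|ay] /=.
  + move=> _.
    move: hx; rewrite eq_sym (negbTE ax) /= => /hm /orP[xA|xC].
    * have := order_path_min ltn_trans sA => /allP /(_ _ xA). rewrite ay. lia.
    * move/allP: ac => /(_ _ xC). rewrite ay. lia.
  + rewrite ltnS => hi.
    move: hx hy; rewrite eq_sym (negbTE ax) eq_sym (negbTE ay) /= => hx hy.
    by case/andP: (IH A C h1 h2 sA' sC g x y xy hx hy hi) => -> ->; rewrite ?orbT.
Qed.

Lemma Aset_ev K N : N < K -> Aset (2 * K.+1) (2 * N.+1) = true.
Proof. move=> h; rewrite /Aset oddM (_ : odd 2 = false) // andFb; lia. Qed.
Lemma Aset_od K N : Aset (2 * K.+1) (2 * N.+1).+1 = false.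
Proof. rewrite /Aset -addn1 oddD oddM (_ : odd 2 = false) // andFb; lia. Qed.

Lemma lists_aux K N : N <= K ->
  [seq j <- iota 1 (2*N).+1 | Aset (2*K.+1) j] = 1 :: [seq 2*i | i <- iota 1 N] /\
  [seq j <- iota 1 (2*N).+1 | ~~ Aset (2*K.+1) j] = [seq (2*i).+1 | i <- iota 1 N].
Proof.
elim: N => [|N IH] h; first by [].
have [IH1 IH2] := IH (ltnW h).
rewrite (_ : (2*N.+1).+1 = (2*N).+1 + 2) ?iotaD ?filter_cat ?IH1 ?IH2; last by lia.
rewrite (_ : iota 1 N.+1 = iota 1 N ++ [:: N.+1]); last by rewrite -[N.+1]addn1 iotaD add1n addn1.
rewrite (_ : 1 + (2*N).+1 = 2 * N.+1); last by lia.
rewrite !map_cat /= Aset_ev // Aset_od /=.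
by [].
Qed.

Lemma iota_split K : iota 1 (2*K.+1) = iota 1 (2*K).+1 ++ [:: 2*K.+1].
Proof. have e : 2 * K.+1 = (2*K).+1 + 1 by lia. rewrite {1}e iotaD /= add1n. do 3 f_equal. lia. Qed.

Lemma Alist_eq K : Alist K.+1 = 1 :: [seq 2 * i | i <- iota 1 K].
Proof.
rewrite /Alist iota_split filter_cat (proj1 (@lists_aux K K (leqnn K))) /=.
rewrite /Aset oddM (_ : odd 2 = false) // andFb.
by rewrite (_ : (2 * K.+1 == 1) || _ = false) ?cats0 //; lia.
Qed.

Lemma Clist_eq K : Clist K.+1 = rcons [seq (2 * i).+1 | i <- iota 1 K] (2 * K.+1).
Proof.
rewrite /Clist iota_split filter_cat (proj2 (@lists_aux K K (leqnn K))) /=.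
rewrite /Aset oddM (_ : odd 2 = false) // andFb.
by rewrite (_ : ~~ ((2 * K.+1 == 1) || _) = true) ?cats1 //; lia.
Qed.

Lemma size_Alist K : size (Alist K.+1) = K.+1.
Proof. by rewrite Alist_eq /= size_map size_iota. Qed.
Lemma size_Clist K : size (Clist K.+1) = K.+1.
Proof. by rewrite Clist_eq size_rcons size_map size_iota. Qed.

Lemma nth_Alist K r : r <= K -> nth 0 (Alist K.+1) r <= (2 * r).+1.
Proof.
rewrite Alist_eq; case: r => [|r] //= h.
rewrite (nth_map 0) ?size_iota // nth_iota //; lia.
Qed.

Lemma nth_Clist K j : j <= K -> (2 * j).+2 <= nth 0 (Clist K.+1) j.
Proof.
rewrite Clist_eq -cats1 nth_cat size_map size_iota => h.
case: (ltnP j K) => h2.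
- rewrite (nth_map 0) ?size_iota // nth_iota //; lia.
- rewrite (_ : j - K = 0) /=; lia.
Qed.

Lemma sorted_Alist k : sorted ltn (Alist k).
Proof. exact: (sorted_filter ltn_trans _ (iota_ltn_sorted _ _)). Qed.
Lemma sorted_Clist k : sorted ltn (Clist k).
Proof. exact: (sorted_filter ltn_trans _ (iota_ltn_sorted _ _)). Qed.

Lemma good_lists K v : forall r t,
  (forall p, r + count negb (take p v) <= t + count id (take p v) + 1) ->
  r + count negb v <= K.+1 -> t + count id v <= K.+1 ->
  good v (drop r (Alist K.+1)) (drop t (Clist K.+1)).
Proof.
elim: v => [|b v IH] r t hb h1 h2 //=.
case: b hb h1 h2 => /= hb h1 h2.
- rewrite -drop1 drop_drop add1n; apply: IH => //; last by lia.
  move=> p; have := hb p.+1; rewrite /=. lia.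
- apply/andP; split.
  + have := hb 1; rewrite /= take0 /= => h3.
    apply/(all_nthP 0) => i; rewrite size_drop size_Clist => hi.
    rewrite -nth0 nth_drop addn0 nth_drop.
    have a := nth_Alist K r ltac:(lia). have b := nth_Clist K (t + i) ltac:(lia). lia.
  + rewrite -drop1 drop_drop add1n; apply: IH => //; last by lia.
    move=> p; have := hb p.+1; rewrite /=. lia.
Qed.

Lemma count_idneg (s : seq bool) : count id s + count negb s = size s.
Proof. elim: s => [|[] s IH] //=; lia. Qed.

Lemma index_iota' m l x : m <= x < m + l -> index x (iota m l) = x - m.
Proof.
move=> h; have hm : x \in iota m l by rewrite mem_iota.
have := nth_index 0 hm; rewrite nth_iota; [lia | by rewrite -{2}(size_iota m l) index_mem].
Qed.

Lemma Aset_down m N j : j < m -> Aset N j -> Aset m j.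
Proof.
move=> h; rewrite /Aset => /orP[->//|/and3P[a b c]]; apply/orP; right; apply/and3P; split => //; lia.
Qed.
Lemma Aset_up m N j : m <= N -> Aset m j -> Aset N j.
Proof.
move=> h; rewrite /Aset => /orP[->//|/and3P[a b c]]; apply/orP; right; apply/and3P; split => //; lia.
Qed.

Lemma Aset_odd m j : odd j -> 1 < j -> Aset m j = false.
Proof. move=> o h; rewrite /Aset; apply/negbTE/negP => /orP[/eqP|/and3P[a _ _]]; [lia| by rewrite o in a]. Qed.
Lemma Aset_big m j : m <= j -> 1 < j -> Aset m j = false.
Proof. move=> h1 h2; rewrite /Aset; apply/negbTE/negP => /orP[/eqP|/and3P[_ _]]; lia. Qed.

Theorem lemma4 (n k : nat) (w : seq bool) :
  2 <= n -> 1 <= k -> 2 * k <= n ->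
  size w = 2 * k.+1 -> dyck w ->
  exists q : seq nat, in_part n k q /\ take (2 * k) q = sseq k w.
Proof.
move=> hn hk hkn hw /andP[/eqP hc /allP hpre].
have pre : forall p, p <= size w -> count negb (take p w) <= count id (take p w).
  by move=> p hp; apply: hpre; rewrite mem_iota; lia.
clear hpre.
case: k hk hkn hw => [//|K] _ hkn hw.
case: w hw hc pre => [//|b0 w'] hw hc pre.
case/lastP: w' hw hc pre => [|v bl] hw hc pre; first by move: hw => /=; lia.
rewrite -cats1 in hw hc pre *.
have hv : size v = 2 * K.+1 by move: hw; rewrite /= size_cat /=; lia.
have hb0 : b0 = true.
  by move: (pre 1); rewrite /= take0; case: (b0) => //= /(_ isT).
subst b0.
have hbl : bl = false.
  move: (pre (size v).+1); rewrite /= take_size_cat // size_cat /=.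
  move: hc; rewrite /= !count_cat /=; case: (bl) => //=. lia.
subst bl.
have cv := count_idneg v.
have pre2 := pre (size v).+1; rewrite /= take_size_cat // size_cat /= in pre2.
have hcv : count id v = K.+1 /\ count negb v = K.+1.
  move: hc pre2; rewrite /= !count_cat /=. lia.
case: hcv => hci hcn.
have ballot : forall p, count negb (take p v) <= count id (take p v) + 1.
  move=> p; case: (leqP p (size v)) => hp.
  - move: (pre p.+1); rewrite /= takel_cat // size_cat /=. lia.
  - rewrite take_oversize ?hci ?hcn //; lia.
clear pre pre2 hc.
set A := Alist K.+1. set C := Clist K.+1. set s := mrg v A C.
pose P := fun x => ~~ Aset (2 * K.+1) x.
have hmap : map P s = v.
  apply: mrg_map; rewrite ?size_Alist ?size_Clist ?hci ?hcn //.
  - by apply/allP => x; rewrite mem_filter => /andP[].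
  - by apply/allP => x; rewrite mem_filter /P /= negbK => /andP[].
have hsz : size s = 2 * K.+1 by rewrite -(size_map P) hmap.
have hperm : perm_eq s (iota 1 (2 * K.+1)).
  apply: perm_trans (mrg_perm v A C _ _) _; rewrite ?size_Alist ?size_Clist ?hci ?hcn //.
  rewrite !take_oversize ?size_Alist ?size_Clist //.
  by have /permPl h := perm_filterC (Aset (2 * K.+1)) (iota 1 (2 * K.+1)); rewrite h.
have hs : sseq K.+1 (true :: v ++ [:: false]) = s.
  rewrite /s; have := mrg_nth v A C 0 0; rewrite !drop0 => ->.
  rewrite /sseq hv (_ : iota 1 (2 * K.+1) = [seq 1 + i | i <- iota 0 (2*K.+1)]) ?(iotaDl 1 0) // -map_comp.
  apply/eq_in_map => p; rewrite mem_iota /= => hp.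
  rewrite add1n /= nth_cat hv (_ : p < 2 * K.+1) ?add0n ?drop0 ?takel_cat ?hv //; lia.
have hgood : good v A C.
  have := good_lists K v 0 0; rewrite !drop0; apply; [move=> p; have := ballot p; lia | lia | lia].
have inv := mrg_inv v A C (ltac:(rewrite size_Clist; lia)) (ltac:(rewrite size_Alist; lia))
  (sorted_Alist _) (sorted_Clist _) hgood.
have memS : forall x, (x \in s) = (1 <= x < 1 + 2 * K.+1).
  by move=> x; rewrite (perm_mem hperm) mem_iota.
set R := iota (1 + 2 * K.+1) (n - 2 * K.+1).
set q := s ++ R.
have ixS : forall x, 1 <= x <= 2 * K.+1 -> index x q = index x s /\ index x s < 2 * K.+1.
  move=> x hx; rewrite /q index_cat memS (_ : 1 <= x < 1 + 2 * K.+1); last by lia.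
  by split => //; rewrite -hsz index_mem memS; lia.
have ixR : forall x, 2 * K.+1 < x <= n -> index x q = x - 1.
  move=> x hx; rewrite /q index_cat memS (_ : (1 <= x < 1 + 2 * K.+1) = false); last by apply/negbTE/negP; lia.
  rewrite hsz index_iota'; lia.
have F1 : forall x y, 1 <= x -> x < y -> y <= n -> index y q < index x q ->
    [/\ y <= 2 * K.+1, Aset (2 * K.+1) x & ~~ Aset (2 * K.+1) y].
  move=> x y h1 h2 h3; case: (leqP y (2 * K.+1)) => hy.
  - have [ex sx] := ixS x ltac:(lia). have [ey sy] := ixS y ltac:(lia). rewrite ex ey => hi.
    have := inv x y h2 ltac:(rewrite memS; lia) ltac:(rewrite memS; lia) hi.
    case/andP; rewrite !mem_filter => /andP[ax _] /andP[ay _]; split => //.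
  - rewrite ixR; last by lia.
    case: (leqP x (2 * K.+1)) => hx.
    + have [ex sx] := ixS x ltac:(lia); rewrite ex; lia.
    + rewrite ixR; lia.
exists q; split; last by rewrite hs /q take_size_cat.
split; [split|split].
- rewrite /is_order /q (_ : iota 1 n = iota 1 (2 * K.+1) ++ R); first by rewrite perm_cat2r.
  by rewrite /R -iotaD subnKC.
- move=> i j l hi hij hjl hl; split.
  + move=> Aj; apply/negP => /andP[h1 h2].
    have [a1 a2 a3] := F1 i j hi hij ltac:(lia) h1.
    have [b1 b2 b3] := F1 i l hi ltac:(lia) hl h2.
    by have := Aset_down (2 * K.+1) n j ltac:(lia) Aj; rewrite (negbTE a3).
  + move=> nAj; apply/negP => /andP[h1 h2].
    have [b1 b2 b3] := F1 j l ltac:(lia) hjl hl h2.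
    by move: nAj; rewrite (Aset_up (2 * K.+1) n j hkn b2).
- by rewrite /top_is /q take_size_cat.
- move=> hK2; apply/negP; rewrite (_ : 2 * (K.+1 - 1) = 2 * K); last by lia.
  rewrite /top_is /q takel_cat ?hsz; last by lia.
  move/permP => /(_ P).
  have cP : count P (take (2 * K) s) = count id (take (2 * K) v).
    by rewrite -hmap -map_take count_map.
  have e : iota 1 (2 * K + 2) = iota 1 (2 * K) ++ iota (1 + 2 * K) 2 := iotaD _ _ _.
  rewrite (_ : 2 * K + 2 = 2 * K.+1) in e; last by lia.
  have := size_Clist K; rewrite /Clist size_filter e count_cat /=.
  rewrite /P (Aset_odd (2 * K.+1) (1 + 2 * K)); last (by lia); last by rewrite oddD oddM.
  rewrite (Aset_big (2 * K.+1) (1 + 2 * K).+1); [|lia|lia].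
  rewrite -/P cP => h1 h2.
  have := ballot (2 * K); have := count_idneg (take (2 * K) v).
  rewrite size_takel; last by lia.
  lia.
Qed.
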